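(* Let $\mathcal{A} \colon \mathbb{R}^n \to \mathbb{R}^m$ be a linear map with operator norm $\|\mathcal{A}\|$ (with respect to the Euclidean norms). Let $(\mathcal{D}_\theta)_{\theta \in \Theta}$ be a family of maps $\mathcal{D}_\theta \colon \mathbb{R}^n \to \mathbb{R}^n$, each of which is a contraction (Lipschitz with constant strictly less than $1$ in the Euclidean norm). Let $\Omega \colon \mathbb{R}^n \to \mathbb{R}^n$ be nonexpansive (Lipschitz with constant at most $1$). Let $s \in (0, 1/\|\mathcal{A}\|^2)$ and $\lambda \in (0,1)$. Define, for $\mathbf{x}, \mathbf{v} \in \mathbb{R}^n$ and $\mathbf{y} \in \mathbb{R}^m$, $$\mathcal{G}(\mathbf{x},\mathbf{y}) = \mathbf{x} - 2s\,\mathcal{A}^\top(\mathcal{A}\mathbf{x} - \mathbf{y}), \qquad \mathcal{N}_\theta(\mathbf{v}) = \Omega\bigl(\lambda\,\mathcal{D}_\theta(\mathbf{v}) + (1-\lambda)\,\mathbf{v}\bigr).$$ Then for every $\mathbf{y} \in \mathbb{R}^m$ and every $\theta \in \Theta$, the map $\mathbf{x} \mapsto \mathcal{N}_\theta(\mathcal{G}(\mathbf{x},\mathbf{y}))$ from $\mathbb{R}^n$ to $\mathbb{R}^n$ is a contraction and hence has exactly one fixed point $\mathbf{x}^\ast \in \mathbb{R}^n$. In particular, the map $\mathcal{B}_\theta \colon \mathbb{R}^m \to \mathbb{R}^n$, $\mathbf{y} \mapsto \mathbf{x}^\ast$, where $\mathbf{x}^\ast$ is the unique solution of $\mathbf{x}^\ast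 = \mathcal{N}_\theta(\mathcal{G}(\mathbf{x}^\ast,\mathbf{y}))$, is well defined.
   Context: $\mathcal{A}^\top$ denotes the transpose (adjoint) of $\mathcal{A}$. All norms on $\mathbb{R}^n$ and $\mathbb{R}^m$ are Euclidean, and $\|\mathcal{A}\|$ is the corresponding operator norm. *)

(* Defs.v *)
From HB Require Import structures.
From mathcomp Require Import all_boot all_order all_algebra.
From mathcomp Require Import boolp classical_sets reals.
Set Implicit Arguments. Unset Strict Implicit. Unset Printing Implicit Defensive.
Import Order.TTheory GRing.Theory Num.Theory.
Local Open Scope ring_scope.

Definition enorm (R : realType) (n : nat) (v : 'cV[R]_n) : R :=
  Num.sqrt (\sum_(i < n) v i 0 ^+ 2).

Definition opnorm (R : realType) (m n : nat) (A : 'M[R]_(m, n)) : R :=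
  reals.sup [set enorm (A *m x) | x in [set x : 'cV[R]_n | enorm x <= 1]]%classic.

Definition lipschitz_with (R : realType) (n : nat) (k : R)
  (f : 'cV[R]_n -> 'cV[R]_n) : Prop :=
  forall x y, enorm (f x - f y) <= k * enorm (x - y).

Definition contraction (R : realType) (n : nat) (f : 'cV[R]_n -> 'cV[R]_n) : Prop :=
  exists k : R, 0 <= k /\ k < 1 /\ lipschitz_with k f.

Definition nonexpansive (R : realType) (n : nat) (f : 'cV[R]_n -> 'cV[R]_n) : Prop :=
  lipschitz_with 1 f.

Definition Gmap (R : realType) (m n : nat) (A : 'M[R]_(m, n)) (s : R)
  (x : 'cV[R]_n) (y : 'cV[R]_m) : 'cV[R]_n :=
  x - (2 * s) *: (A^T *m (A *m x - y)).

Definition Nmap (R : realType) (n : nat) (Omega D : 'cV[R]_n -> 'cV[R]_n) (lam : R)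
  (v : 'cV[R]_n) : 'cV[R]_n :=
  Omega (lam *: D v + (1 - lam) *: v).

(* Main.v *)
From Pilot Require Import Defs.
From HB Require Import structures.
From mathcomp Require Import all_boot all_order all_algebra.
From mathcomp Require Import boolp classical_sets reals.
From mathcomp Require Import ring lra.
Import Order.TTheory GRing.Theory Num.Theory.
Local Open Scope ring_scope.
Set Implicit Arguments. Unset Strict Implicit.

Section Euclid.
Variable R : realType.

Definition dot n (u v : 'cV[R]_n) : R := \sum_i u i 0 * v i 0.

Lemma dotC n (u v : 'cV[R]_n) : dot u v = dot v u.
Proof. by apply: eq_bigr => i _; rewrite mulrC. Qed.

Lemma dot_ge0 n (u : 'cV[R]_n) : 0 <= dot u u.
Proof. by apply: sumr_ge0 => i _; rewrite -expr2 sqr_ge0. Qed.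

Lemma enormE n (u : 'cV[R]_n) : enorm u = Num.sqrt (dot u u).
Proof. by rewrite /enorm /dot; congr Num.sqrt; apply: eq_bigr => i _; rewrite expr2. Qed.

Lemma enorm_ge0 n (u : 'cV[R]_n) : 0 <= enorm u.
Proof. by rewrite enormE sqrtr_ge0. Qed.

Lemma enorm_sq n (u : 'cV[R]_n) : enorm u ^+ 2 = dot u u.
Proof. by rewrite enormE sqr_sqrtr // dot_ge0. Qed.

Lemma dot_quad n (a b : R) (u v : 'cV[R]_n) :
  dot (a *: u + b *: v) (a *: u + b *: v) =
  a ^+ 2 * dot u u + 2 * a * b * dot u v + b ^+ 2 * dot v v.
Proof.
rewrite /dot !mulr_sumr -!big_split /=; apply: eq_bigr => i _; rewrite !mxE; ring.
Qed.

Lemma dot_lin n (a b : R) (u v w : 'cV[R]_n) :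
  dot (a *: u + b *: v) w = a * dot u w + b * dot v w.
Proof.
rewrite /dot !mulr_sumr -!big_split /=; apply: eq_bigr => i _; rewrite !mxE; ring.
Qed.

Lemma dot0_eq n (u : 'cV[R]_n) : dot u u = 0 -> u = 0.
Proof.
move=> /eqP; rewrite psumr_eq0 => [/allP H|i _]; last by rewrite -expr2 sqr_ge0.
apply/matrixP => i j; rewrite (ord1 j) mxE.
have /H : i \in index_enum 'I_n by rewrite mem_index_enum.
by rewrite /= -expr2 sqrf_eq0 => /eqP.
Qed.

Lemma enorm0_eq n (u : 'cV[R]_n) : enorm u = 0 -> u = 0.
Proof. by move=> H; apply: dot0_eq; rewrite -enorm_sq H expr0n. Qed.

Lemma enorm_le n (u : 'cV[R]_n) c : 0 <= c -> dot u u <= c ^+ 2 -> enorm u <= c.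
Proof.
move=> c0 H; rewrite enormE -(ger0_norm c0) -sqrtr_sqr; exact: ler_wsqrtr.
Qed.

Lemma dot_le n (u v : 'cV[R]_n) : dot u v <= enorm u * enorm v.
Proof.
have [a0|a0] := eqVneq (enorm u) 0.
  rewrite a0 mul0r (enorm0_eq a0) /dot big1 // => i _; rewrite mxE mul0r //.
have [b0|b0] := eqVneq (enorm v) 0.
  rewrite b0 mulr0 (enorm0_eq b0) /dot big1 // => i _; rewrite mxE mulr0 //.
have ha : 0 < enorm u by rewrite lt_def a0 enorm_ge0.
have hb : 0 < enorm v by rewrite lt_def b0 enorm_ge0.
have := dot_ge0 (enorm v *: u + (- enorm u) *: v).
rewrite dot_quad -!enorm_sq => H.
have hab := mulr_gt0 ha hb.
nra.
Qed.

Lemma dotNr n (u v : 'cV[R]_n) : dot u (- v) = - dot u v.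
Proof. by rewrite /dot -sumrN; apply: eq_bigr => i _; rewrite mxE mulrN. Qed.

Lemma enormN n (v : 'cV[R]_n) : enorm (- v) = enorm v.
Proof. by rewrite !enormE dotNr dotC dotNr opprK. Qed.

Lemma dot_abs n (u v : 'cV[R]_n) : `|dot u v| <= enorm u * enorm v.
Proof.
rewrite ler_norml dot_le andbT lerNl -dotNr -(enormN v); exact: dot_le.
Qed.

Lemma enormZ n c (v : 'cV[R]_n) : enorm (c *: v) = `|c| * enorm v.
Proof.
rewrite !enormE -(addr0 (c *: v)) -(scale0r v) dot_quad.
by rewrite expr0n /= !(mul0r, mulr0, addr0) sqrtrM ?sqr_ge0 // sqrtr_sqr.
Qed.

Lemma enormD n (u v : 'cV[R]_n) : enorm (u + v) <= enorm u + enorm v.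
Proof.
apply: enorm_le; first by rewrite addr_ge0 ?enorm_ge0.
rewrite -(scale1r u) -(scale1r v) dot_quad !scale1r -!enorm_sq.
have := dot_le u v; nra.
Qed.

Lemma enormB n (u v : 'cV[R]_n) : enorm (u - v) <= enorm u + enorm v.
Proof. by rewrite -(enormN v) enormD. Qed.

Lemma dotM n (u v : 'cV[R]_n) : dot u v = (u^T *m v) 0 0.
Proof. by rewrite mxE; apply: eq_bigr => i _; rewrite mxE. Qed.

Lemma dot_adj m n (A : 'M[R]_(m, n)) w x : dot (A^T *m w) x = dot w (A *m x).
Proof. by rewrite !dotM trmx_mul trmxK mulmxA. Qed.

End Euclid.

Section Op.
Variables (R : realType) (m n : nat) (A : 'M[R]_(m, n)).

Lemma coord_le k (x : 'cV[R]_k) i : `|x i 0| <= enorm x.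
Proof.
rewrite enormE -sqrtr_sqr; apply: ler_wsqrtr; rewrite /dot (bigD1 i) //= expr2 lerDl.
by apply: sumr_ge0 => j _; rewrite -expr2 sqr_ge0.
Qed.

Lemma enorm0 k : enorm (0 : 'cV[R]_k) = 0.
Proof. by rewrite enormE /dot big1 ?sqrtr0 // => i _; rewrite mxE mul0r. Qed.

Let K := \sum_i dot (row i A)^T (row i A)^T.

Lemma K_ge0 : 0 <= K.
Proof. by apply: sumr_ge0 => i _; exact: dot_ge0. Qed.

Lemma A_bound x : enorm (A *m x) <= Num.sqrt K * enorm x.
Proof.
apply: enorm_le; first by rewrite mulr_ge0 ?sqrtr_ge0 ?enorm_ge0.
rewrite exprMn sqr_sqrtr ?K_ge0 // enorm_sq /K mulr_suml /dot.
apply: ler_sum => i _.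
have -> : (A *m x) i 0 = dot (row i A)^T x.
  by rewrite !mxE; apply: eq_bigr => j _; rewrite !mxE.
have := dot_abs (row i A)^T x; rewrite ler_norml => /andP[h1 h2].
have := enorm_ge0 (row i A)^T; have := enorm_ge0 x.
rewrite -[X in _ <= X * _]/(dot _ _) -enorm_sq -[X in _ <= _ * X]/(dot x x) -enorm_sq.
nra.
Qed.

Let S := [set enorm (A *m x) | x in [set x : 'cV[R]_n | enorm x <= 1]]%classic.

Lemma has_supS : has_sup S.
Proof.
split; first by exists (enorm (A *m 0)), 0 => //=; rewrite enorm0.
exists (Num.sqrt K) => _ [x /= hx <-].
apply: (le_trans (A_bound x)); rewrite -[X in _ <= X]mulr1 ler_wpM2l //.
exact: sqrtr_ge0.
Qed.

Lemma op_ub x : enorm x <= 1 -> enorm (A *m x) <= opnorm A.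
Proof. by move=> hx; apply: (sup_upper_bound has_supS); exists x. Qed.

Lemma op_ge0 : 0 <= opnorm A.
Proof. have := @op_ub 0; rewrite mulmx0 !enorm0; apply; exact: ler01. Qed.

Lemma op_le x : enorm (A *m x) <= opnorm A * enorm x.
Proof.
have [e0|e0] := eqVneq (enorm x) 0.
  by rewrite e0 mulr0 (enorm0_eq e0) mulmx0 enorm0.
have he : 0 < enorm x by rewrite lt_def e0 enorm_ge0.
have := op_ub (x := (enorm x)^-1 *: x).
rewrite enormZ -scalemxAr enormZ ger0_norm ?invr_ge0 ?enorm_ge0 // mulVf //.
move=> /(_ (lexx _)); rewrite -(ler_pM2l he) mulrA mulfV // mul1r mulrC; exact.
Qed.

Lemma opT_le w : enorm (A^T *m w) <= opnorm A * enorm w.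
Proof.
set z := A^T *m w.
have [z0|z0] := eqVneq (enorm z) 0.
  by rewrite z0 mulr_ge0 ?op_ge0 ?enorm_ge0.
have hz : 0 < enorm z by rewrite lt_def z0 enorm_ge0.
have h : enorm z ^+ 2 <= enorm w * (opnorm A * enorm z).
  rewrite enorm_sq {1}/z dot_adj; apply: (le_trans (dot_le _ _)).
  by rewrite ler_wpM2l ?enorm_ge0 // op_le.
rewrite expr2 mulrCA mulrA ler_pM2r // in h.
Qed.

End Op.

Section Maps.
Variables (R : realType) (m n : nat) (A : 'M[R]_(m, n)) (s : R).

Lemma G_diff x x' y : Gmap A s x y - Gmap A s x' y =
  (x - x') - (2 * s) *: (A^T *m (A *m (x - x'))).
Proof.
rewrite /Gmap !mulmxBr.
move: (A^T *m (A *m x)) (A^T *m (A *m x')) (A^T *m y) => P P' Q.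
by apply/matrixP => i j; rewrite !mxE; ring.
Qed.

Lemma G_lip x x' y : 0 <= s -> s * opnorm A ^+ 2 < 1 ->
  enorm (Gmap A s x y - Gmap A s x' y) <= enorm (x - x').
Proof.
move=> s0 s1; rewrite G_diff; set d := x - x'; set c := 2 * s.
set z := A^T *m (A *m d).
apply: enorm_le; first exact: enorm_ge0.
have -> : d - c *: z = 1 *: d + (- c) *: z by rewrite scale1r scaleNr.
rewrite dot_quad (dotC d) {1}/z dot_adj -!enorm_sq.
set p := enorm (A *m d).
have hz : enorm z <= opnorm A * p by exact: opT_le.
have hz2 : enorm z ^+ 2 <= opnorm A ^+ 2 * p ^+ 2.
  by rewrite -exprMn ler_pXn2r // ?nnegrE ?enorm_ge0 ?mulr_ge0 ?op_ge0 ?enorm_ge0.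
have c0 : 0 <= c by rewrite /c mulr_ge0.
have hc : c * opnorm A ^+ 2 <= 2 by rewrite /c -mulrA; nra.
have p0 : 0 <= p ^+ 2 by rewrite sqr_ge0.
have h1 : c ^+ 2 * enorm z ^+ 2 <= c ^+ 2 * (opnorm A ^+ 2 * p ^+ 2).
  by rewrite ler_wpM2l ?sqr_ge0.
have h2 : c ^+ 2 * (opnorm A ^+ 2 * p ^+ 2) <= 2 * c * p ^+ 2.
  have := mulr_ge0 c0 p0; nra.
rewrite sqrrN expr1n mul1r; lra.
Qed.

Lemma H_diff (Dm : 'cV[R]_n -> 'cV[R]_n) lam v w :
  (lam *: Dm v + (1 - lam) *: v) - (lam *: Dm w + (1 - lam) *: w) =
  lam *: (Dm v - Dm w) + (1 - lam) *: (v - w).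
Proof.
move: (Dm v) (Dm w) => P Q.
by apply/matrixP => i j; rewrite !mxE; ring.
Qed.

End Maps.

From mathcomp Require Import all_classical all_reals all_analysis.

Definition cvR (R : realType) n := 'M[R]_(n,1).
HB.instance Definition _ (R : realType) n := NormedModule.on (cvR R n).
HB.instance Definition _ (R : realType) n := Complete.on (cvR R n).

Section FP.
Variables (R : realType) (n : nat).

Lemma mxn_coord (v : 'cV[R]_n) i : `|v i 0| <= `|v : cvR R n|.
Proof.
rewrite [leRHS]/Num.norm /= mx_normrE; apply/bigmax_geP; right => /=; by exists (i, 0).
Qed.

Lemma mxn_le (v : 'cV[R]_n) : `|v : cvR R n| <= enorm v.
Proof.
rewrite [leLHS]/Num.norm /= mx_normrE; apply: bigmax_le; first exact: enorm_ge0.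
by move=> [i j] _ /=; rewrite (ord1 j) coord_le.
Qed.

Lemma enorm_mxn (v : 'cV[R]_n) : enorm v <= Num.sqrt n%:R * `|v : cvR R n|.
Proof.
apply: enorm_le; first by rewrite mulr_ge0 ?sqrtr_ge0.
rewrite exprMn sqr_sqrtr ?ler0n // /dot.
have -> : n%:R * `|v : cvR R n| ^+ 2 = \sum_(i < n) `|v : cvR R n| ^+ 2.
  by rewrite sumr_const card_ord mulr_natl.
apply: ler_sum => i _.
rewrite -expr2 -real_normK ?num_real // ler_pXn2r ?nnegrE ?normr_ge0 //.
exact: mxn_coord.
Qed.

Lemma bern (h : R) k : 0 <= h -> 1 + k%:R * h <= (1 + h) ^+ k.
Proof.
move=> h0; elim: k => [|k IH]; first by rewrite mul0r addr0 expr0.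
rewrite exprS -natr1; have : 0 <= (k%:R : R) * h by rewrite mulr_ge0.
have : 1 + k%:R * h <= (1 + h) ^+ k := IH. nra.
Qed.

Lemma small_pow (q C : R) : 0 <= q -> q < 1 -> 0 <= C -> exists k, q ^+ k * C < 1.
Proof.
move=> q0 q1 C0.
have [->|qn0] := eqVneq q 0; first by exists 1%N; rewrite expr1 mul0r.
have qp : 0 < q by rewrite lt_def qn0 q0.
set h := q^-1 - 1.
have hp : 0 < h by rewrite /h subr_gt0 invf_gt1.
have hN := archi_boundP (x := C / h) (divr_ge0 C0 (ltW hp)).
exists (Num.Def.archi_bound (C / h)).
set N := Num.Def.archi_bound (C / h) in hN *.
have hb := bern N (ltW hp).
have : C < (1 + h) ^+ N.
  have hN2 : C < N%:R * h by rewrite -ltr_pdivrMr //; exact: hN.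
  lra.
rewrite /h addrC subrK => hC.
have qN : 0 < q ^+ N := exprn_gt0 _ qp.
by rewrite -(mulfV (lt0r_neq0 qN)) -exprVn ltr_pM2l.
Qed.

Lemma fixpoint_exists (F : 'cV[R]_n -> 'cV[R]_n) q :
  0 <= q -> q < 1 -> lipschitz_with q F -> exists x, x = F x.
Proof.
move=> q0 q1 hF.
have iter_lip k a b : enorm (iter k F a - iter k F b) <= q ^+ k * enorm (a - b).
  elim: k => [|k IH]; first by rewrite expr0 mul1r.
  rewrite !iterS exprS -mulrA; apply: (le_trans (hF _ _)).
  by rewrite ler_wpM2l.
have [k hk] := small_pow q0 q1 (sqrtr_ge0 (n%:R : R)).
have hk0 : 0 <= q ^+ k * Num.sqrt n%:R by rewrite mulr_ge0 ?exprn_ge0 ?sqrtr_ge0.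
pose g : cvR R n -> cvR R n := iter k F.
have ctr : is_contraction (totalfun_ setT g).
  exists (NngNum hk0); split => //=.
  move=> [a b] _ /=.
  apply: (le_trans (mxn_le _)); apply: (le_trans (iter_lip k a b)).
  rewrite -mulrA ler_wpM2l ?exprn_ge0 //; exact: enorm_mxn.
have [p _ hp] := banach_fixed_point ctr closedT (ex_intro _ 0 I).
exists p.
have hp' : F p = g (F p).
  by rewrite /g -iterSr iterS -hp.
have := contraction_fixpoint_unique ctr I I hp hp'.
by move=> <-.
Qed.

End FP.

Import Pilot.Defs.
Import Order.TTheory GRing.Theory Num.Theory.

Theorem mainTheorem1 (R : realType) (m n : nat) (A : 'M[R]_(m, n))
  (Theta : Type) (D : Theta -> 'cV[R]_n -> 'cV[R]_n) (Omega : 'cV[R]_n -> 'cV[R]_n)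
  (s lam : R) :
  (forall th, contraction (D th)) ->
  nonexpansive Omega ->
  0 < s -> s * opnorm A ^+ 2 < 1 ->
  0 < lam -> lam < 1 ->
  forall (y : 'cV[R]_m) (th : Theta),
    contraction (fun x => Nmap Omega (D th) lam (Gmap A s x y)) /\
    (exists! xs : 'cV[R]_n, xs = Nmap Omega (D th) lam (Gmap A s xs y)).
Proof.
move=> hD hO s0 s1 l0 l1 y th.
have [k [k0 [k1 hk]]] := hD th.
set q := lam * k + (1 - lam).
have q0 : 0 <= q by rewrite /q; nra.
have q1 : q < 1 by rewrite /q; nra.
have lipF : lipschitz_with q (fun x => Nmap Omega (D th) lam (Gmap A s x y)).
  move=> x x' /=; rewrite /Nmap; apply: (le_trans (hO _ _)); rewrite mul1r H_diff.
  apply: (le_trans (enormD _ _)).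
  rewrite !enormZ (ger0_norm (ltW l0)) ger0_norm ?subr_ge0 ?(ltW l1) //.
  have g := G_lip x x' y (ltW s0) s1.
  have hk' := hk (Gmap A s x y) (Gmap A s x' y).
  set e := enorm (Gmap A s x y - Gmap A s x' y) in g hk' *.
  set E := enorm (x - x') in g *.
  have h1 : lam * enorm (D th (Gmap A s x y) - D th (Gmap A s x' y)) <= lam * (k * e).
    by apply: ler_wpM2l; [exact: ltW | exact: hk'].
  have h2 : q * e <= q * E by rewrite ler_wpM2l.
  rewrite /q in h2 *; lra.
split; first by exists q.
have [x hx] := fixpoint_exists q0 q1 lipF.
exists x; split => // x' hx'.
have := lipF x x'; rewrite /= -hx -hx' => hle.
have e0 : enorm (x - x') = 0.
  by apply/le_anti; rewrite enorm_ge0 andbT; have := enorm_ge0 (x - x'); nra.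
exact: (subr0_eq (enorm0_eq e0)).
Qed.
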